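(* Let $k,l,m,n\in\mathbb{N}_0$, let $I\subset\mathbb{R}$ be an interval, and suppose that $F$ is $k$-compatible with $\Pi_n$ of degree $l$ on $I$. Let \[ \mathcal{F}_{m,n}=\{p(x)+F(x)q(x):\ p\in\Pi_m,\ q\in\Pi_n\}, \] considered as functions on $I$. If $k>m$, then every nonzero $f\in\mathcal{F}_{m,n}$ has at most $k+l$ distinct zeros in $I$. If, in addition, $l<n-(k-m)+2$, then every nonzero $f\in\mathcal{F}_{m,n}$ has fewer than $m+n+2$ distinct zeros in $I$.
   Context: $\Pi_n$ denotes the space of real polynomials of degree at most $n$. For $k,n,l\in\mathbb{N}_0$ and an interval $I$, a function $F:I\to\mathbb{R}$ is called $k$-compatible with $\Pi_n$ of degree $l$ on $I$ if: (1) $F\in C^{k+1}(I)$; (2) there is a function $\tilde F:I\to\mathbb{R}$ (depending on $k$ and $n$ but not on $q$) which is monotone on $I$ and satisfies $\tilde F(x)\ne0$ for all $x\in I$, such that for every nonzero $q\in\Pi_n$ there is a function $\tilde q:I\to\mathbb{R}$ with $\frac{d^k}{dx^k}(Fq)=\tilde F\,\tilde q$ on $I$ and $\tilde q$ has at most $l$ distinct zeros in $I$. *)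

(* Defs.v *)
From Stdlib Require Import Reals Lra Lia ZArith List.
From Coquelicot Require Import Coquelicot.
Open Scope R_scope.

Definition is_interval (I : R -> Prop) : Prop :=
  forall x y z, I x -> I z -> x <= y -> y <= z -> I y.

Definition poly_eval (c : nat -> R) (n : nat) (x : R) : R :=
  sum_f_R0 (fun i => c i * x ^ i) n.

Definition poly_nonzero (c : nat -> R) (n : nat) : Prop :=
  exists i, (i <= n)%nat /\ c i <> 0.

(* f' is the derivative of f on I, taken within I
   (one-sided at endpoints belonging to I). *)
Definition is_deriv_on (I : R -> Prop) (f f' : R -> R) : Prop :=
  forall x, I x ->
    filterlim (fun y => (f y - f x) / (y - x))
              (within (fun y => I y /\ y <> x) (locally x))
              (locally (f' x)).

Fixpoint is_deriv_n_on (I : R -> Prop) (k : nat) (f g : R -> R) : Prop :=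
  match k with
  | O => forall x, I x -> f x = g x
  | S k' => exists h, is_deriv_on I f h /\ is_deriv_n_on I k' h g
  end.

Definition continuous_on_I (I : R -> Prop) (g : R -> R) : Prop :=
  forall x, I x -> filterlim g (within I (locally x)) (locally (g x)).

Definition Cr_on (I : R -> Prop) (r : nat) (F : R -> R) : Prop :=
  exists g, is_deriv_n_on I r F g /\ continuous_on_I I g.

Definition monotone_on (I : R -> Prop) (g : R -> R) : Prop :=
  (forall x y, I x -> I y -> x <= y -> g x <= g y) \/
  (forall x y, I x -> I y -> x <= y -> g y <= g x).

Definition at_most_zeros (I : R -> Prop) (g : R -> R) (N : nat) : Prop :=
  forall s : list R, NoDup s -> (forall x, In x s -> I x /\ g x = 0) ->
    (length s <= N)%nat.

Definition k_compatible (k n l : nat) (I : R -> Prop) (F : R -> R) : Prop :=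
  Cr_on I (S k) F /\
  exists Ft : R -> R,
    monotone_on I Ft /\ (forall x, I x -> Ft x <> 0) /\
    forall c : nat -> R, poly_nonzero c n ->
      exists qt : R -> R,
        is_deriv_n_on I k (fun x => F x * poly_eval c n x)
                          (fun x => Ft x * qt x) /\
        at_most_zeros I qt l.

(* Main.v *)
Require Import Defs.
From Stdlib Require Import Reals ZArith List.
From Coquelicot Require Import Coquelicot.
From Stdlib Require Import Lra Lia Classical.
Open Scope R_scope.

Lemma ball_R (x y e : R) : ball x e y <-> Rabs (y - x) < e.
Proof. reflexivity. Qed.

Lemma deriv_eps I f h x : is_deriv_on I f h -> I x -> forall eps, 0 < eps ->
  exists d, 0 < d /\ forall y, I y -> y <> x -> Rabs (y - x) < d ->
   Rabs ((f y - f x) / (y - x) - h x) < eps.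
Proof.
  intros H Ix eps He. specialize (H x Ix).
  assert (HP : locally (h x) (fun r => Rabs (r - h x) < eps)).
  { exists (mkposreal eps He). intros r Hr. apply ball_R in Hr. exact Hr. }
  specialize (H _ HP). destruct H as [d Hd].
  exists d. split. apply cond_pos. intros y Iy yx Hy.
  apply (Hd y). apply ball_R. exact Hy. split; assumption.
Qed.

Lemma eps_deriv I f h : (forall x, I x -> forall eps, 0 < eps ->
  exists d, 0 < d /\ forall y, I y -> y <> x -> Rabs (y - x) < d ->
   Rabs ((f y - f x) / (y - x) - h x) < eps) -> is_deriv_on I f h.
Proof.
  intros H x Ix P [eps HP].
  destruct (H x Ix eps (cond_pos eps)) as [d [Hd0 Hd]].
  exists (mkposreal d Hd0). intros y Hy [Iy yx]. apply HP. apply ball_R.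
  apply Hd; auto.
Qed.

Lemma cont_within I f h x : is_deriv_on I f h -> I x -> forall eps, 0 < eps ->
  exists d, 0 < d /\ forall y, I y -> Rabs (y - x) < d -> Rabs (f y - f x) < eps.
Proof.
  intros H Ix eps He.
  destruct (deriv_eps I f h x H Ix 1 Rlt_0_1) as [d1 [Hd1 Hd]].
  assert (Hp : 0 < Rabs (h x) + 1) by (pose proof (Rabs_pos (h x)); lra).
  exists (Rmin d1 (eps / (Rabs (h x) + 1))). split.
  { apply Rmin_glb_lt; auto. apply Rdiv_lt_0_compat; auto. }
  intros y Iy Hy.
  destruct (Req_dec y x) as [->|yx].
  { replace (f x - f x) with 0 by ring. rewrite Rabs_R0. exact He. }
  pose (q := (f y - f x) / (y - x)).
  assert (E : f y - f x = q * (y - x)).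
  { unfold q. field. lra. }
  rewrite E, Rabs_mult.
  assert (Hq : Rabs q < Rabs (h x) + 1).
  { specialize (Hd y Iy yx (Rlt_le_trans _ _ _ Hy (Rmin_l _ _))).
    fold q in Hd.
    replace q with ((q - h x) + h x) by ring.
    pose proof (Rabs_triang (q - h x) (h x)). lra. }
  assert (Hy2 : Rabs (y - x) < eps / (Rabs (h x) + 1))
    by (apply Rlt_le_trans with (1 := Hy); apply Rmin_r).
  assert (Hy3 : Rabs (y - x) * (Rabs (h x) + 1) < eps).
  { apply Rmult_lt_compat_r with (r := Rabs (h x) + 1) in Hy2; auto.
    replace (eps / (Rabs (h x) + 1) * (Rabs (h x) + 1)) with eps in Hy2
      by (field; lra). exact Hy2. }
  pose proof (Rabs_pos q). pose proof (Rabs_pos (y - x)). nra.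
Qed.

Definition clamp (a b y : R) := Rmax a (Rmin b y).

Lemma clamp_in a b y : a <= b -> a <= clamp a b y <= b.
Proof. intros. unfold clamp, Rmax, Rmin.
  destruct (Rle_dec b y); destruct (Rle_dec a _); lra. Qed.

Lemma clamp_id a b y : a <= y <= b -> clamp a b y = y.
Proof. intros. unfold clamp, Rmax, Rmin.
  destruct (Rle_dec b y); destruct (Rle_dec a _); lra. Qed.

Lemma clamp_dist a b y x : a <= x <= b -> Rabs (clamp a b y - x) <= Rabs (y - x).
Proof. intros. unfold clamp, Rmax, Rmin.
  destruct (Rle_dec b y); destruct (Rle_dec a _);
  unfold Rabs; repeat destruct Rcase_abs; lra. Qed.

Lemma rolle_step I f h a b : is_interval I -> is_deriv_on I f h -> I a -> I b ->
  a < b -> f a = 0 -> f b = 0 -> exists c, a < c < b /\ h c = 0.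
Proof.
  intros HI Hd Ia Ib ab fa fb.
  pose (g := fun y => f (clamp a b y)).
  assert (Icl : forall y, a <= y <= b -> I y).
  { intros y Hy. apply (HI a y b); tauto. }
  assert (Hder : forall x, a < x < b -> derivable_pt_lim g x (h x)).
  { intros x Hx eps He.
    destruct (deriv_eps I f h x Hd (Icl x ltac:(lra)) eps He) as [d [Hd0 Hdd]].
    assert (Hpos : 0 < Rmin d (Rmin (x - a) (b - x))).
    { repeat apply Rmin_glb_lt; lra. }
    exists (mkposreal _ Hpos). intros h0 Hh0 Hlt. simpl in Hlt.
    pose proof (Rmin_l d (Rmin (x - a) (b - x))).
    pose proof (Rmin_r d (Rmin (x - a) (b - x))).
    pose proof (Rmin_l (x - a) (b - x)). pose proof (Rmin_r (x - a) (b - x)).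
    assert (Hr : a <= x + h0 <= b).
    { revert Hlt; unfold Rabs; destruct Rcase_abs; intros; lra. }
    unfold g. rewrite (clamp_id a b (x + h0) Hr), (clamp_id a b x ltac:(lra)).
    specialize (Hdd (x + h0) (Icl _ Hr) ltac:(lra)).
    replace (x + h0 - x) with h0 in Hdd by ring. apply Hdd; lra. }
  assert (Hcont : forall x, a <= x <= b -> continuity_pt g x).
  { intros x Hx eps He.
    destruct (cont_within I f h x Hd (Icl x Hx) eps He) as [d [Hd0 Hdd]].
    exists d. split; auto. intros y [_ Hy]. simpl in Hy. unfold R_dist in Hy.
    simpl. unfold R_dist. unfold g. rewrite (clamp_id a b x Hx).
    apply Hdd. apply Icl. apply clamp_in; lra.
    eapply Rle_lt_trans. apply clamp_dist; auto. exact Hy. }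
  pose (pr := fun x (P : a < x < b) => exist (fun l => derivable_pt_abs g x l) (h x) (Hder x P)).
  destruct (Rolle g a b pr Hcont ab) as [c [P Hc]].
  { unfold g. rewrite clamp_id by lra. rewrite clamp_id by lra. congruence. }
  exists c. split; auto.
Qed.

Lemma max_in (s : list R) : s <> nil -> exists M, In M s /\ forall y, In y s -> y <= M.
Proof.
  induction s as [|x s IH]; intros H; [congruence|].
  destruct s as [|z s'].
  - exists x. split; [left; auto|]. intros y [<-|[]]; lra.
  - destruct IH as [M [HM HM']]; [discriminate|].
    destruct (Rle_dec x M).
    + exists M. split; [right; auto|]. intros y [<-|Hy]; auto.
    + exists x. split; [left; auto|]. intros y [<-|Hy]. lra.
      specialize (HM' y Hy). lra.
Qed.

Lemma rolle_list I f h : is_interval I -> is_deriv_on I f h -> forall N s,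
  NoDup s -> length s = S N -> (forall x, In x s -> I x /\ f x = 0) ->
  exists t, NoDup t /\ length t = N /\ (forall x, In x t -> I x /\ h x = 0) /\
   (forall c, In c t -> exists y, In y s /\ c < y).
Proof.
  intros HI Hd N. induction N as [|N IH]; intros s nd len z.
  - exists nil. simpl. repeat split; auto; try constructor; intros; tauto.
  - destruct (max_in s) as [M [HM HMmax]].
    { intro; subst; discriminate. }
    destruct (in_split M s HM) as [l1 [l2 Hs]]. subst s.
    pose proof (NoDup_remove_1 _ _ _ nd) as nd'.
    pose proof (NoDup_remove_2 _ _ _ nd) as nin.
    assert (sub : forall y, In y (l1 ++ l2) -> In y (l1 ++ M :: l2)).
    { intros y Hy. apply in_app_or in Hy. apply in_or_app. simpl. tauto. }
    assert (len' : length (l1 ++ l2) = S N).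
    { rewrite length_app in *. simpl in len. lia. }
    destruct (IH (l1 ++ l2) nd' len' (fun x Hx => z x (sub x Hx)))
      as [t [ndt [lent [zt wt]]]].
    destruct (max_in (l1 ++ l2)) as [M' [HM' HM'max]].
    { intro E. rewrite E in len'. discriminate. }
    assert (M'M : M' < M).
    { pose proof (HMmax M' (sub _ HM')). destruct (Req_dec M' M); [|lra].
      subst. contradiction. }
    destruct (z M HM) as [IM fM]. destruct (z M' (sub _ HM')) as [IM' fM'].
    destruct (rolle_step I f h M' M HI Hd IM' IM M'M fM' fM) as [c [Hc hc]].
    exists (c :: t). split; [|split; [|split]].
    + constructor; auto. intro Hct. destruct (wt c Hct) as [y [Hy cy]].
      specialize (HM'max y Hy). lra.
    + simpl. lia.
    + intros x0 [<-|Hx]. split. apply (HI M' c M); auto; lra. auto. apply zt; auto.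
    + intros c0 [<-|Hc0]. exists M. split; auto. tauto.
      destruct (wt c0 Hc0) as [y [Hy cy]]. exists y. auto.
Qed.

Lemma rolle_count I f h N : is_interval I -> is_deriv_on I f h ->
  at_most_zeros I h N -> at_most_zeros I f (S N).
Proof.
  intros HI Hd Hh s nd z. destruct (length s) as [|N'] eqn:E. lia.
  destruct (rolle_list I f h HI Hd N' s nd E z) as [t [ndt [lent [zt _]]]].
  specialize (Hh t ndt zt). lia.
Qed.

Lemma rolle_iter I k : is_interval I -> forall f g N, is_deriv_n_on I k f g ->
  at_most_zeros I g N -> at_most_zeros I f (k + N).
Proof.
  intros HI. induction k as [|k IH]; intros f g N Hd Hg.
  - simpl in Hd. intros s nd z. apply Hg; auto. intros x Hx.
    destruct (z x Hx). split; auto. rewrite <- Hd; auto.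
  - destruct Hd as [h [Hh Hk]]. simpl. apply (rolle_count I f h); auto.
    eapply IH; eauto.
Qed.

Lemma amz_ext I f g N : (forall x, I x -> f x = g x) -> at_most_zeros I g N ->
  at_most_zeros I f N.
Proof. intros E H s nd z. apply H; auto. intros x Hx. destruct (z x Hx).
  split; auto. rewrite <- E; auto. Qed.

Lemma amz_weak I f N N' : (N <= N')%nat -> at_most_zeros I f N -> at_most_zeros I f N'.
Proof. intros L H s nd z. specialize (H s nd z). lia. Qed.

Lemma deriv_on_plus I f1 g1 f2 g2 : is_deriv_on I f1 g1 -> is_deriv_on I f2 g2 ->
  is_deriv_on I (fun x => f1 x + f2 x) (fun x => g1 x + g2 x).
Proof.
  intros H1 H2. apply eps_deriv. intros x Ix eps He.
  destruct (deriv_eps I f1 g1 x H1 Ix (eps/2) ltac:(lra)) as [d1 [P1 D1]].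
  destruct (deriv_eps I f2 g2 x H2 Ix (eps/2) ltac:(lra)) as [d2 [P2 D2]].
  exists (Rmin d1 d2). split. apply Rmin_glb_lt; auto.
  intros y Iy yx Hy.
  specialize (D1 y Iy yx (Rlt_le_trans _ _ _ Hy (Rmin_l _ _))).
  specialize (D2 y Iy yx (Rlt_le_trans _ _ _ Hy (Rmin_r _ _))).
  replace ((f1 y + f2 y - (f1 x + f2 x)) / (y - x) - (g1 x + g2 x)) with
    (((f1 y - f1 x) / (y - x) - g1 x) + ((f2 y - f2 x) / (y - x) - g2 x))
    by (field; lra).
  eapply Rle_lt_trans. apply Rabs_triang. lra.
Qed.

Lemma deriv_n_plus I k : forall f1 g1 f2 g2, is_deriv_n_on I k f1 g1 ->
  is_deriv_n_on I k f2 g2 ->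
  is_deriv_n_on I k (fun x => f1 x + f2 x) (fun x => g1 x + g2 x).
Proof.
  induction k as [|k IH]; intros f1 g1 f2 g2 H1 H2; simpl in *.
  - intros x Ix. rewrite H1, H2; auto.
  - destruct H1 as [h1 [A1 B1]]. destruct H2 as [h2 [A2 B2]].
    exists (fun x => h1 x + h2 x). split. apply deriv_on_plus; auto. apply IH; auto.
Qed.

Lemma lim_deriv_on I f f' : (forall x, derivable_pt_lim f x (f' x)) -> is_deriv_on I f f'.
Proof.
  intros H. apply eps_deriv. intros x Ix eps He.
  destruct (H x eps He) as [d Hd]. exists d. split. apply cond_pos.
  intros y Iy yx Hy. specialize (Hd (y - x) ltac:(lra) Hy).
  replace (x + (y - x)) with y in Hd by ring. exact Hd.
Qed.

Lemma zero_chain I k : is_deriv_n_on I k (fun _ => 0) (fun _ => 0).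
Proof.
  induction k; simpl. auto. exists (fun _ => 0). split; auto.
  apply lim_deriv_on. intros. apply derivable_pt_lim_const.
Qed.

Definition da (a : nat -> R) (i : nat) := INR (S i) * a (S i).

Lemma mono_deriv (c x : R) (n : nat) :
  is_derive (fun y => c * y ^ S n) x (c * (INR (S n) * x ^ n)).
Proof.
  apply is_derive_Reals.
  apply derivable_pt_lim_scal.
  replace n with (pred (S n)) at 2 by reflexivity.
  apply derivable_pt_lim_pow.
Qed.

Lemma poly_deriv m a x : is_derive (poly_eval a (S m)) x (poly_eval (da a) m x).
Proof.
  revert x. induction m as [|m IH]; intros x.
  - unfold poly_eval, da. simpl.
    auto_derive. trivial. ring.
  - change (poly_eval a (S (S m))) with
      (fun y => poly_eval a (S m) y + a (S (S m)) * y ^ S (S m)).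
    change (poly_eval (da a) (S m) x) with
      (poly_eval (da a) m x + da a (S m) * x ^ S m).
    apply (is_derive_plus (V := R_NormedModule)). apply IH.
    unfold da. replace (INR (S (S m)) * a (S (S m)) * x ^ S m) with
      (a (S (S m)) * (INR (S (S m)) * x ^ S m)) by ring.
    apply mono_deriv.
Qed.

Lemma poly_deriv_on I m a : is_deriv_on I (poly_eval a (S m)) (poly_eval (da a) m).
Proof. apply lim_deriv_on. intros x. apply is_derive_Reals, poly_deriv. Qed.

Lemma poly_chain I m : forall a k, (m < k)%nat ->
  is_deriv_n_on I k (poly_eval a m) (fun _ => 0).
Proof.
  induction m as [|m IH]; intros a k Hk; destruct k as [|k]; try lia; simpl.
  - exists (fun _ => 0). split. 2: apply zero_chain.
    apply lim_deriv_on. intros x. unfold poly_eval. simpl.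
    apply derivable_pt_lim_const.
  - exists (poly_eval (da a) m). split. apply poly_deriv_on. apply IH. lia.
Qed.

Lemma poly_zero_eval b n x : (forall i, (i <= n)%nat -> b i = 0) -> poly_eval b n x = 0.
Proof.
  intros H. unfold poly_eval. induction n as [|n IH]; simpl.
  rewrite H; auto; ring. rewrite IH, H; auto; ring.
Qed.

Lemma poly_zeros I m : is_interval I -> forall a, poly_nonzero a m ->
  at_most_zeros I (poly_eval a m) m.
Proof.
  intros HI. induction m as [|m IH]; intros a [i [Hi Ha]].
  - assert (i = 0%nat) by lia. subst.
    intros s nd z. destruct s as [|x s]. simpl; lia.
    destruct (z x (or_introl eq_refl)) as [_ Hx]. unfold poly_eval in Hx.
    simpl in Hx. exfalso. apply Ha. lra.
  - destruct (Req_dec (a (S m)) 0) as [E|E].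
    + apply amz_ext with (g := poly_eval a m).
      { intros x _. change (poly_eval a m x + a (S m) * x ^ S m = poly_eval a m x).
        rewrite E. ring. }
      apply amz_weak with m. lia. apply IH.
      exists i. split; auto. destruct (Nat.eq_dec i (S m)). subst; contradiction. lia.
    + apply (rolle_count I _ (poly_eval (da a) m)); auto. apply poly_deriv_on.
      apply IH. exists m. split; auto. unfold da. intro Z.
      apply Rmult_integral in Z. destruct Z as [Z|Z]; auto.
      pose proof (lt_0_INR (S m) ltac:(lia)). lra.
Qed.

Theorem proposition1 (k l m n : nat) (I : R -> Prop) (F : R -> R) :
  is_interval I ->
  k_compatible k n l I F ->
  forall a b : nat -> R,
    let f := fun x => poly_eval a m x + F x * poly_eval b n x in
    (exists x, I x /\ f x <> 0) ->
    ((m < k)%nat -> at_most_zeros I f (k + l)) /\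
    ((m < k)%nat ->
     (Z.of_nat l < Z.of_nat n - (Z.of_nat k - Z.of_nat m) + 2)%Z ->
     at_most_zeros I f (m + n + 1)).
Proof.
  intros HI [_ [Ft [_ [HFt Hc]]]] a b f Hf.
  assert (key : (m < k)%nat -> at_most_zeros I f (k + l)).
  { intros Hmk. destruct (classic (poly_nonzero b n)) as [Hb|Hb].
    - destruct (Hc b Hb) as [qt [Hd Hz]].
      pose proof (deriv_n_plus I k _ _ _ _ (poly_chain I m a k Hmk) Hd) as H.
      apply (rolle_iter I k HI f _ l H).
      intros s nd z. apply Hz; auto. intros x Hx. destruct (z x Hx) as [Ix E].
      split; auto. rewrite Rplus_0_l in E. apply Rmult_integral in E.
      destruct E as [E|E]; auto. exfalso; exact (HFt x Ix E).
    - assert (Hb0 : forall i, (i <= n)%nat -> b i = 0).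
      { intros i Hi. apply NNPP. intro. apply Hb. exists i. auto. }
      apply amz_ext with (g := poly_eval a m).
      { intros x _. unfold f. rewrite (poly_zero_eval b n x Hb0). ring. }
      apply amz_weak with m. lia. apply poly_zeros; auto.
      apply NNPP. intro Ha. destruct Hf as [x [Ix Hx]]. apply Hx. unfold f.
      rewrite (poly_zero_eval b n x Hb0).
      rewrite (poly_zero_eval a m x). ring.
      intros i Hi. apply NNPP. intro. apply Ha. exists i. auto. }
  split; auto. intros Hmk Hz. apply amz_weak with (k + l)%nat. lia. auto.
Qed.
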